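(* Let $X$ be a $T_0$ space, $x\in X$ and $(x_i)_{i\in I}$ a net in $X$. Consider: (1) $(x_i)_{i\in I}$ $GSI_2$-converges to $x$. (2) For every $F\in X^{(<\omega)}$ with $F\ll_{I_2}x$ and every open set $U$ of $X$ with $F\subseteq U$, $x_i\in U$ eventually. Then (1) implies (2), and if $X$ is $QI_2$-continuous, then (1) and (2) are equivalent.
   Context: For a $T_0$ space $X$, the specialization order is $x\le y$ iff $x\in \mathrm{cl}\{y\}$; $\uparrow A=\{x: a\le x\text{ for some } a\in A\}$, $\uparrow x=\uparrow\{x\}$; $A^\uparrow$, $A^\downarrow$ are the sets of upper and lower bounds of $A$, and $A^\delta=(A^\uparrow)^\downarrow$. A nonempty subset $A$ of a space is irreducible if whenever $A\subseteq F_1\cup F_2$ with $F_1,F_2$ closed, $A\subseteq F_1$ or $A\subseteq F_2$. $X^{(<\omega)}$ is the set of nonempty finite subsets of $X$. $P_S(X)$ is the set of nonempty compact saturated (upper) subsets of $X$ with the upper Vietoris topology, basis $\{\square U: U\text{ open}\}$, $\square U=\{Q: Q\subseteq U\}$. A net is eventually in $U$ if from some index on all its terms lie in $U$. For $A\subseteq X$, $x\in X$, $A\ll_{I_2}x$ means: for every irreducible $D\subseteq X$ with $x\in D^\delta$, $A\cap\mathrm{cl}D\ne\emptyset$. For $x\in X$, $w(x)=\{\uparrow F: F\in X^{(<\omega)}, F\ll_{I_2}x\}$. $X$ is $QI_2$-continuous if for every $x$, $w(x)$ is irreducible in $P_S(X)$ and $\uparrow x=\bigcap w(x)$. A net $(x_i)_{i\in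 I}$ $GSI_2$-converges to $x$ if there exists $\mathcal F\subseteq X^{(<\omega)}$ with $\{\uparrow G: G\in\mathcal F\}$ irreducible in $P_S(X)$ such that (i) for every open $U$, if $\uparrow G\subseteq U$ for some $G\in\mathcal F$ then $x_i\in U$ eventually, and (ii) $\bigcap_{G\in\mathcal F}\uparrow G\subseteq\uparrow x$. *)

(* Defs.v *)
From HB Require Import structures.
From mathcomp Require Import all_boot all_order.
From mathcomp Require Import all_classical all_reals all_analysis.
Set Implicit Arguments. Unset Strict Implicit. Unset Printing Implicit Defensive.
Local Open Scope classical_set_scope.

Section Defs.
Variable X : topologicalType.

Definition spec_le (x y : X) : Prop := closure [set y] x.

Definition upset (A : set X) : set X :=
  [set y | exists2 a, A a & spec_le a y].

Definition upper_bounds (A : set X) : set X := [set y | forall a, A a -> spec_le a y].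
Definition lower_bounds (A : set X) : set X := [set y | forall a, A a -> spec_le y a].
Definition delta (A : set X) : set X := lower_bounds (upper_bounds A).

Definition saturated (Q : set X) : Prop := upset Q `<=` Q.

Definition fin_ne (F : set X) : Prop := finite_set F /\ F !=set0.

Definition irreducible (A : set X) : Prop :=
  A !=set0 /\
  forall F1 F2 : set X, closed F1 -> closed F2 ->
    A `<=` F1 `|` F2 -> A `<=` F1 \/ A `<=` F2.

Definition PS : set (set X) := [set Q | compact Q /\ Q !=set0 /\ saturated Q].

Definition box (U : set X) : set (set X) := [set Q | PS Q /\ Q `<=` U].

(* open sets of the upper Vietoris topology: unions of basic opens box U *)
Definition PS_open (W : set (set X)) : Prop :=
  W `<=` PS /\
  forall Q, W Q -> exists U : set X, [/\ open U, Q `<=` U & box U `<=` W].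

Definition PS_closed (C : set (set X)) : Prop :=
  C `<=` PS /\ PS_open (PS `\` C).

Definition PS_irreducible (A : set (set X)) : Prop :=
  A `<=` PS /\ A !=set0 /\
  forall C1 C2 : set (set X), PS_closed C1 -> PS_closed C2 ->
    A `<=` C1 `|` C2 -> A `<=` C1 \/ A `<=` C2.

Definition way_below_I2 (A : set X) (x : X) : Prop :=
  forall D : set X, irreducible D -> delta D x -> A `&` closure D !=set0.

Definition wI2 (x : X) : set (set X) :=
  [set Q | exists F, [/\ fin_ne F, way_below_I2 F x & Q = upset F]].

Definition QI2_continuous : Prop :=
  forall x : X, PS_irreducible (wI2 x) /\
                upset [set x] = \bigcap_(Q in wI2 x) Q.

Definition directed_set (I : Type) (le : I -> I -> Prop) : Prop :=
  [/\ (exists i : I, True), (forall i, le i i),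
      (forall i j k, le i j -> le j k -> le i k)
    & (forall i j, exists k, le i k /\ le j k)].

Definition eventually_in (I : Type) (le : I -> I -> Prop) (net : I -> X)
  (U : set X) : Prop :=
  exists i0, forall i, le i0 i -> U (net i).

Definition GSI2_converges (I : Type) (le : I -> I -> Prop) (net : I -> X)
  (x : X) : Prop :=
  exists FF : set (set X),
    [/\ (forall G, FF G -> fin_ne G),
        PS_irreducible [set Q | exists2 G, FF G & Q = upset G],
        (forall U : set X, open U -> (exists2 G, FF G & upset G `<=` U) ->
            eventually_in le net U)
      & \bigcap_(G in FF) upset G `<=` upset [set x]].

End Defs.

(* Main.v *)
Require Import Defs.
From mathcomp Require Import all_boot all_order.
From mathcomp Require Import all_classical all_reals all_analysis.
Local Open Scope classical_set_scope.

Section Aux.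
Variable X : topologicalType.

Lemma spec_refl (g : X) : spec_le g g.
Proof. exact: subset_closure. Qed.

Lemma closed_down (B : set X) y g : closed B -> B y -> spec_le g y -> B g.
Proof.
move=> cB By gy; apply: cB; apply: (closureS _ gy) => z /= ->; exact: By.
Qed.

Lemma chain_seq (s : seq X) (F : set (set X)) : F !=set0 -> total_on F subset ->
  (forall B, F B -> exists g, [set` s] g /\ ~ B g) ->
  exists g, [set` s] g /\ forall B, F B -> ~ B g.
Proof.
elim: s F => [|a s IH] F [B0 FB0] tot h.
  by have [g [/= + _]] := h _ FB0; rewrite in_nil.
have [allna|] := pselect (forall B, F B -> ~ B a).
  by exists a; split => //=; rewrite in_cons eqxx.
move=> /existsNP [B1 /not_implyP [FB1 /contrapT B1a]].
pose F' := [set B | F B /\ B1 `<=` B].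
have [|||g [sg hg]] := IH F'.
- by exists B1; split.
- by move=> u v [Fu _] [Fv _]; apply: tot.
- move=> B [FB B1B]; have [g [/= sg nBg]] := h _ FB.
  exists g; split => //=; move: sg; rewrite in_cons => /orP [/eqP ga|//].
  by exfalso; apply: nBg; rewrite ga; apply: B1B.
exists g; split; first by rewrite /= in_cons sg orbT.
move=> B FB; have [BB1|B1B] := tot _ _ FB FB1.
  by move=> Bg; apply: (hg B1) => //; [split|apply: BB1].
by apply: hg; split.
Qed.

Lemma chain_fin (P : set X) (F : set (set X)) : finite_set P -> F !=set0 ->
  total_on F subset ->
  (forall B, F B -> exists g, P g /\ ~ B g) ->
  exists g, P g /\ forall B, F B -> ~ B g.
Proof. by move=> /finite_seqP [s ->]; apply: chain_seq. Qed.


Definition meetsM (E : set X) : set (set X) := [set Q | PS Q /\ Q `&` E !=set0].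

Lemma meetsM_closed (E : set X) : closed E -> PS_closed (meetsM E).
Proof.
move=> cE; split; first by move=> Q [].
split; first by move=> Q [].
move=> Q [PQ nM]; exists (~` E); split.
- by rewrite openC.
- by move=> y Qy Ey; apply: nM; split => //; exists y.
- move=> Q2 [PQ2 sQ2]; split => //; move=> [_ [y [Q2y Ey]]]; exact: sQ2 _ Q2y Ey.
Qed.

Lemma rudin (FF : set (set X)) (C : set X) :
  PS_irreducible [set Q | exists2 G, FF G & Q = upset G] ->
  (forall G, FF G -> fin_ne G) -> closed C ->
  (forall G, FF G -> exists g, G g /\ C g) ->
  exists A, [/\ irreducible A, closed A, A `<=` C &
     forall G, FF G -> exists g, G g /\ A g].
Proof.
move=> [sPS [[Q0 [G0 FG0 _]] irrA]] fin cC hC.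
pose P := [set B : set X | open B /\
   forall G, FF G -> exists g, [/\ G g, C g & ~ B g]].
have [B [[oB PB] maxB]] : exists B, P B /\ forall B', B `<` B' -> ~ P B'.
  apply: Zorn_bigcup => F FP tot.
  have [->|F0] := eqVneq F set0.
    rewrite bigcup_set0; split; first exact: open0.
    by move=> G FG; have [g [Gg Cg]] := hC G FG; exists g; split.
  split; first by apply: bigcup_open => i /FP [].
  move=> G FG.
  have : exists g, (G `&` C) g /\ forall B, F B -> ~ B g.
    apply: chain_fin.
    - by apply: finite_setIl; case: (fin G FG).
    - exact/set0P.
    - exact: tot.
    - move=> B' FB'; have [_ /(_ G FG) [g [Gg Cg nB]]] := FP _ FB'.
      by exists g.
  move=> [g [[Gg Cg] hg]].
  by exists g; split => // -[B' FB' B'g]; exact: hg _ FB' B'g.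
pose A := C `&` ~` B.
have cA : closed A by apply: closedI => //; rewrite closedC.
have meetA : forall G, FF G -> exists g, G g /\ A g.
  by move=> G FG; have [g [Gg Cg nB]] := PB G FG; exists g.
exists A; split => //; last by move=> y [].
split.
  by have [g [_ Ag]] := meetA _ FG0; exists g.
move=> B1 B2 cB1 cB2 AB.
have key : forall B1, closed B1 -> ~ (A `<=` B1) ->
    exists2 G1, FF G1 & forall g, G1 g -> A g -> B1 g -> False.
  move=> E cE nAE; apply: contrapT => hn.
  apply: (maxB (B `|` ~` E)).
    split; first by move=> y By; left.
    move=> sub; apply: nAE => y Ay; apply: contrapT => nEy.
    by case: Ay => _; apply; apply: sub; right.
  split; first by apply: openU => //; rewrite openC.
  move=> G FG; apply: contrapT => hG; apply: hn; exists G => // g Gg Ag Eg.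
  apply: hG; exists g; split => //; first by case: Ag.
  by case=> [Bg|//]; case: Ag => _; apply.
apply: contrapT => /not_orP [n1 n2].
have [G1 FG1 h1] := key _ cB1 n1.
have [G2 FG2 h2] := key _ cB2 n2.
have [] := irrA (meetsM (A `&` B1)) (meetsM (A `&` B2)).
- by apply: meetsM_closed; apply: closedI.
- by apply: meetsM_closed; apply: closedI.
- move=> Q [G FG ->]; have PQ : PS (upset G) by apply: sPS; exists G.
  have [g [Gg Ag]] := meetA _ FG.
  have gu : upset G g by exists g => //; apply: spec_refl.
  by case: (AB g Ag) => Bg; [left|right]; split => //; exists g.
- move=> /(_ (upset G1)) [|_ [y [[g G1g gy] [Ay B1y]]]]; first by exists G1.
  by apply: (h1 g) => //; apply: closed_down gy.
- move=> /(_ (upset G2)) [|_ [y [[g G2g gy] [Ay B2y]]]]; first by exists G2.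
  by apply: (h2 g) => //; apply: closed_down gy.
Qed.

End Aux.

Theorem proposition4p6 (X : topologicalType) (hT0 : kolmogorov_space X)
  (x : X) (I : Type) (le : I -> I -> Prop) (hI : directed_set le)
  (net : I -> X) :
  let cond2 :=
    forall (F U : set X), fin_ne F -> way_below_I2 F x -> open U ->
      F `<=` U -> eventually_in le net U in
  (GSI2_converges le net x -> cond2) /\
  (QI2_continuous X -> (GSI2_converges le net x <-> cond2)).
Proof.
move=> cond2.
have part1 : GSI2_converges le net x -> cond2.
  move=> [FF [fin irr conv cap]] F U finF wbF oU FU.
  apply: conv => //; apply: contrapT => hn.
  have hC : forall G, FF G -> exists g, G g /\ (~` U) g.
    move=> G FG; have : ~ (upset G `<=` U) by move=> sGU; apply: hn; exists G.
    move=> /existsNP [y /not_implyP [[g Gg gy] nUy]].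
    exists g; split => //; apply: (@closed_down _ _ y g _ nUy gy).
    by rewrite closedC.
  have [A [irrA cA AC meetA]] := @rudin _ _ _ irr fin (open_closedC oU) hC.
  have dA : delta A x.
    move=> u ub.
    have : (\bigcap_(G in FF) upset G) u.
      move=> G FG; have [g [Gg Ag]] := meetA G FG.
      by exists g => //; apply: ub.
    by move=> /cap [a /= -> ].
  have [y [Fy clAy]] := wbF A irrA dA.
  have clA : closure A `<=` A by rewrite -(proj1 (closure_id A) cA).
  exact: (AC y (clA y clAy) (FU y Fy)).
split => // qc; split => // h2.
pose FF := [set F | fin_ne F /\ way_below_I2 F x].
have eqW : [set Q | exists2 G, FF G & Q = upset G] = wI2 x.
  apply/seteqP; split => Q /=.
    by move=> [G [fG wG] ->]; exists G.
  by move=> [G [fG wG ->]]; exists G.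
have [irrW capW] := qc x.
exists FF; split.
- by move=> G [].
- by rewrite eqW.
- move=> U oU [G [fG wG] sGU]; apply: (h2 G U fG wG oU) => g Gg; apply: sGU.
  by exists g => //; exact: (@spec_refl X).
- move=> z hz; rewrite capW => Q [G [fG wG ->]]; apply: hz; by split.
Qed.
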